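(* If $\vdash \mathbb{N}\ \checkmark$, then reducing $\mathbb{N}$: (1) there is never a type mismatch; (2) the communications occur in the order prescribed by global types.
   Context: Setting: a calculus of synchronous multiparty sessions with named checkpoints, where participants' configurations hold an active process and a sequence of checkpointed processes, and sessions can reduce forward (communications, choices) or roll back to a named checkpoint. A network $\mathbb{N}$ is a parallel composition $\mathbb{N}\,\|\,\mathbb{N}'$ of multiparty sessions $\mathbb{M}$, which reduce independently. $\vdash \mathbb{N}\ \checkmark$ means the network is well typed, i.e. every multiparty session in it is typable by some global type $\langle\Upsilon,\mathsf{G}\rangle$ (a pair of a sequence $\Upsilon$ of checkpointed single-threaded global types and an active single-threaded global type $\mathsf{G}$ describing the protocol), with each participant's configuration type agreeing (via subtyping) with the projections of the global type. An application of the communication reduction rule has a type mismatch if there is no sort that can be derived both for the communicated value and for the variable associated to the communicated label in the input process. *)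

(* Defs.v *)
From Stdlib Require Import List Bool Arith.
Import ListNotations.

Definition part := nat.
Definition label := nat.
Definition cname := nat.
Definition var := nat.

Inductive sort := SNat | SBool.
Inductive value := VNat (n : nat) | VBool (b : bool).

Inductive val_has_sort : value -> sort -> Prop :=
| vs_nat n : val_has_sort (VNat n) SNat
| vs_bool b : val_has_sort (VBool b) SBool.

Inductive expr := EVar (x : var) | EVal (v : value).

(** Single-threaded processes:
    0 | q ! { l_i(e_i).P_i }  (internal choice)
      | p ? { l_i(x_i : S_i).P_i } (external choice)
      | checkpoint c. P  *)
Inductive proc :=
| Inact
| Out (q : part) (bs : list (label * expr * proc))
| Inp (p : part) (bs : list (label * var * sort * proc))
| Chk (c : cname) (P : proc).

Definition subst_expr (x : var) (v : value) (e : expr) : expr :=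
  match e with
  | EVar y => if Nat.eqb x y then EVal v else e
  | EVal _ => e
  end.

Fixpoint subst (x : var) (v : value) (P : proc) : proc :=
  match P with
  | Inact => Inact
  | Out q bs =>
      Out q (map (fun b => match b with (l, e, P') => (l, subst_expr x v e, subst x v P') end) bs)
  | Inp p bs =>
      Inp p (map (fun b => match b with (l, y, Srt, P') =>
                   (l, y, Srt, if Nat.eqb x y then P' else subst x v P') end) bs)
  | Chk c P' => Chk c (subst x v P')
  end.

Record config := mkC { saved : list (cname * proc); active : proc }.

(** Multiparty sessions: parallel composition of participants p[[C]] *)
Definition session := list (part * config).

Definition upd (p : part) (C : config) (M : session) : session :=
  map (fun e => if Nat.eqb (fst e) p then (p, C) else e) M.

(** Actions (applications of reduction rules).  A communication records the
    communicated value [v] and the variable [x] of the input branch with its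
    sort [Srt]. *)
Inductive act :=
| AComm (p q : part) (l : label) (v : value) (x : var) (Srt : sort)
| AChk (c : cname)
| ARoll (c : cname).

Inductive glabel :=
| LbComm (p q : part) (l : label)
| LbChk (c : cname)
| LbRoll (c : cname).

Definition label_of (a : act) : glabel :=
  match a with
  | AComm p q l _ _ _ => LbComm p q l
  | AChk c => LbChk c
  | ARoll c => LbRoll c
  end.

(** Type mismatch: no sort is derivable both for the value and for the variable
    associated to the label in the input process (whose sort is [Srt]). *)
Definition type_mismatch (v : value) (Srt : sort) : Prop :=
  ~ (exists Srt', val_has_sort v Srt' /\ Srt' = Srt).

Inductive sstep : session -> act -> session -> Prop :=
| ss_comm M p q sp sq bs cs l v P x Srt Q :
    p <> q ->
    In (p, mkC sp (Out q bs)) M ->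
    In (q, mkC sq (Inp p cs)) M ->
    In (l, EVal v, P) bs ->
    In (l, x, Srt, Q) cs ->
    sstep M (AComm p q l v x Srt) (upd q (mkC sq (subst x v Q)) (upd p (mkC sp P) M))
| ss_chk M c M' :
    M <> [] ->
    Forall2 (fun e e' => fst e = fst e' /\
               exists P, active (snd e) = Chk c P /\
                         snd e' = mkC (saved (snd e) ++ [(c, P)]) P) M M' ->
    sstep M (AChk c) M'
| ss_roll M c M' :
    M <> [] ->
    Forall2 (fun e e' => fst e = fst e' /\
               exists s1 P s2, saved (snd e) = s1 ++ (c, P) :: s2 /\
                               ~ In c (map fst s2) /\
                               snd e' = mkC (s1 ++ [(c, P)]) P) M M' ->
    sstep M (ARoll c) M'.

Inductive network :=
| NSes (M : session)
| NPar (N1 N2 : network).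

(* positions of sessions in a network: false = left, true = right *)
Fixpoint session_at (N : network) (pos : list bool) : option session :=
  match N, pos with
  | NSes M, [] => Some M
  | NPar N1 _, false :: pos' => session_at N1 pos'
  | NPar _ N2, true :: pos' => session_at N2 pos'
  | _, _ => None
  end.

Inductive nstep : network -> list bool -> act -> network -> Prop :=
| ns_ses M a M' : sstep M a M' -> nstep (NSes M) [] a (NSes M')
| ns_left N1 N2 pos a N1' : nstep N1 pos a N1' -> nstep (NPar N1 N2) (false :: pos) a (NPar N1' N2)
| ns_right N1 N2 pos a N2' : nstep N2 pos a N2' -> nstep (NPar N1 N2) (true :: pos) a (NPar N1 N2').

Inductive nsteps : network -> list (list bool * act) -> network -> Prop :=
| nsteps_refl N : nsteps N [] N
| nsteps_step N pos a N' tr N'' :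
    nstep N pos a N' -> nsteps N' tr N'' -> nsteps N ((pos, a) :: tr) N''.

Definition trace_at (pos : list bool) (tr : list (list bool * act)) : list glabel :=
  map (fun pa => label_of (snd pa))
      (filter (fun pa => if list_eq_dec bool_dec (fst pa) pos then true else false) tr).

Inductive ltype :=
| LEnd
| LOut (q : part) (bs : list (label * sort * ltype))
| LIn (p : part) (bs : list (label * sort * ltype))
| LChk (c : cname) (T : ltype).

Inductive subtype : ltype -> ltype -> Prop :=
| sub_end : subtype LEnd LEnd
| sub_out q bs bs' :
    bs <> [] ->
    (forall l Srt T, In (l, Srt, T) bs -> exists T', In (l, Srt, T') bs' /\ subtype T T') ->
    subtype (LOut q bs) (LOut q bs')
| sub_in p bs bs' :
    bs' <> [] ->
    (forall l Srt T', In (l, Srt, T') bs' -> exists T, In (l, Srt, T) bs /\ subtype T T') ->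
    subtype (LIn p bs) (LIn p bs')
| sub_chk c T T' : subtype T T' -> subtype (LChk c T) (LChk c T').

Definition env := var -> option sort.
Definition empty_env : env := fun _ => None.
Definition extend (G : env) (x : var) (Srt : sort) : env :=
  fun y => if Nat.eqb y x then Some Srt else G y.

Inductive expr_typed (G : env) : expr -> sort -> Prop :=
| et_var x Srt : G x = Some Srt -> expr_typed G (EVar x) Srt
| et_val v Srt : val_has_sort v Srt -> expr_typed G (EVal v) Srt.

Inductive proc_typed : env -> proc -> ltype -> Prop :=
| pt_inact G : proc_typed G Inact LEnd
| pt_out G q bs Ts :
    bs <> [] -> NoDup (map (fun b => fst (fst b)) bs) ->
    out_typed G bs Ts -> proc_typed G (Out q bs) (LOut q Ts)
| pt_in G p bs Ts :
    bs <> [] -> NoDup (map (fun b => fst (fst (fst b))) bs) ->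
    in_typed G bs Ts -> proc_typed G (Inp p bs) (LIn p Ts)
| pt_chk G c P T : proc_typed G P T -> proc_typed G (Chk c P) (LChk c T)
with out_typed : env -> list (label * expr * proc) -> list (label * sort * ltype) -> Prop :=
| ot_nil G : out_typed G [] []
| ot_cons G l e P Srt T bs Ts :
    expr_typed G e Srt -> proc_typed G P T -> out_typed G bs Ts ->
    out_typed G ((l, e, P) :: bs) ((l, Srt, T) :: Ts)
with in_typed : env -> list (label * var * sort * proc) -> list (label * sort * ltype) -> Prop :=
| it_nil G : in_typed G [] []
| it_cons G l x Srt P T bs Ts :
    proc_typed (extend G x Srt) P T -> in_typed G bs Ts ->
    in_typed G ((l, x, Srt, P) :: bs) ((l, Srt, T) :: Ts).

Definition config_typed (C : config) (tau : list (cname * ltype)) (T : ltype) : Prop :=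
  Forall2 (fun sp tt => fst sp = fst tt /\ proc_typed empty_env (snd sp) (snd tt)) (saved C) tau /\
  proc_typed empty_env (active C) T.

Inductive gtype :=
| GEnd
| GMsg (p q : part) (bs : list (label * sort * gtype))
| GChk (c : cname) (G : gtype).

Inductive part_of : part -> gtype -> Prop :=
| po_snd p q bs : part_of p (GMsg p q bs)
| po_rcv p q bs : part_of q (GMsg p q bs)
| po_br r p q bs l Srt G : In (l, Srt, G) bs -> part_of r G -> part_of r (GMsg p q bs)
| po_chk r c G : part_of r G -> part_of r (GChk c G).

(** Projection (partial; plain merge for non-involved participants) *)
Inductive projects : gtype -> part -> ltype -> Prop :=
| pr_end r : projects GEnd r LEnd
| pr_snd p q bs Ts :
    p <> q -> bs <> [] -> NoDup (map (fun b => fst (fst b)) bs) ->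
    projects_br p bs Ts -> projects (GMsg p q bs) p (LOut q Ts)
| pr_rcv p q bs Ts :
    p <> q -> bs <> [] -> NoDup (map (fun b => fst (fst b)) bs) ->
    projects_br q bs Ts -> projects (GMsg p q bs) q (LIn p Ts)
| pr_other r p q bs T :
    r <> p -> r <> q -> p <> q -> bs <> [] -> NoDup (map (fun b => fst (fst b)) bs) ->
    (forall l Srt G, In (l, Srt, G) bs -> projects G r T) ->
    projects (GMsg p q bs) r T
| pr_chk r c G T : projects G r T -> projects (GChk c G) r (LChk c T)
with projects_br : part -> list (label * sort * gtype) -> list (label * sort * ltype) -> Prop :=
| pb_nil r : projects_br r [] []
| pb_cons r l Srt G T bs Ts :
    projects G r T -> projects_br r bs Ts -> projects_br r ((l, Srt, G) :: bs) ((l, Srt, T) :: Ts).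

Definition typed_session (M : session) (U : list (cname * gtype)) (G : gtype) : Prop :=
  NoDup (map fst M) /\
  (forall r, (part_of r G \/ exists c Gc, In (c, Gc) U /\ part_of r Gc) -> In r (map fst M)) /\
  (forall p C, In (p, C) M ->
     exists tau T, config_typed C tau T /\
       (exists TG, projects G p TG /\ subtype T TG) /\
       Forall2 (fun ct cg => fst ct = fst cg /\
                  exists TGc, projects (snd cg) p TGc /\ subtype (snd ct) TGc) tau U).

(* |- N  checkmark : every multiparty session in N is typable *)
Inductive wt_network : network -> Prop :=
| wt_ses M U G : typed_session M U G -> wt_network (NSes M)
| wt_par N1 N2 : wt_network N1 -> wt_network N2 -> wt_network (NPar N1 N2).

Inductive gstep : list (cname * gtype) -> gtype -> glabel -> list (cname * gtype) -> gtype -> Prop :=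
| gs_comm U p q bs l Srt G :
    In (l, Srt, G) bs -> gstep U (GMsg p q bs) (LbComm p q l) U G
| gs_inside U r s bs bs' p q l :
    p <> r -> p <> s -> q <> r -> q <> s -> bs <> [] ->
    Forall2 (fun b b' => fst b = fst b' /\ gstep U (snd b) (LbComm p q l) U (snd b')) bs bs' ->
    gstep U (GMsg r s bs) (LbComm p q l) U (GMsg r s bs')
| gs_chk U c G : gstep U (GChk c G) (LbChk c) (U ++ [(c, G)]) G
| gs_roll U G c U1 Gc U2 :
    U = U1 ++ (c, Gc) :: U2 -> ~ In c (map fst U2) ->
    gstep U G (LbRoll c) (U1 ++ [(c, Gc)]) Gc.

Inductive gtrace : list (cname * gtype) -> gtype -> list glabel -> Prop :=
| gt_nil U G : gtrace U G []
| gt_cons U G l U' G' tr : gstep U G l U' G' -> gtrace U' G' tr -> gtrace U G (l :: tr).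

(* Main.v *)
Require Import Defs.
From Stdlib Require Import List Bool Arith Lia FunctionalExtensionality.
Import ListNotations.

Lemma F2_in_l {A B} (R : A -> B -> Prop) l l' a0 :
  Forall2 R l l' -> In a0 l -> exists b0, In b0 l' /\ R a0 b0.
Proof.
  induction 1; simpl; [tauto|]. intros [<-|H1].
  - eauto.
  - destruct (IHForall2 H1) as [b1 [? ?]]; eauto.
Qed.

Lemma F2_in_r {A B} (R : A -> B -> Prop) l l' b0 :
  Forall2 R l l' -> In b0 l' -> exists a0, In a0 l /\ R a0 b0.
Proof.
  induction 1; simpl; [tauto|]. intros [<-|H1].
  - eauto.
  - destruct (IHForall2 H1) as [a1 [? ?]]; eauto.
Qed.

Lemma F2_map {A B C} (f : A -> C) (g : B -> C) (R : A -> B -> Prop) l l' :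
  Forall2 R l l' -> (forall a b, R a b -> f a = g b) -> map f l = map g l'.
Proof. induction 1; simpl; intros; f_equal; auto. Qed.

Lemma exists_F2 {A B} (R : A -> B -> Prop) l :
  (forall x, In x l -> exists y, R x y) -> exists l', Forall2 R l l'.
Proof.
  induction l; intros H.
  - exists []; constructor.
  - destruct (H a (or_introl eq_refl)) as [y Hy].
    destruct IHl as [l' Hl']. { intros; apply H; simpl; auto. }
    exists (y :: l'); constructor; auto.
Qed.

Lemma F2_nonnil {A B} (R : A -> B -> Prop) l l' :
  Forall2 R l l' -> l <> [] -> l' <> [].
Proof. destruct 1; congruence. Qed.

Lemma F2_weaken {A B} (R R' : A -> B -> Prop) l l' :
  Forall2 R l l' -> (forall a b, R a b -> R' a b) -> Forall2 R' l l'.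
Proof. induction 1; constructor; auto. Qed.

Lemma F2_len {A B} (R : A -> B -> Prop) l l' : Forall2 R l l' -> length l = length l'.
Proof. induction 1; simpl; auto. Qed.

Lemma nodup_in_eq {A B} (f : A -> B) l a b :
  NoDup (map f l) -> In a l -> In b l -> f a = f b -> a = b.
Proof.
  induction l; simpl; [tauto|]. intros Hn Ha Hb Hf. inversion Hn; subst.
  destruct Ha as [<-|Ha]; destruct Hb as [<-|Hb]; auto.
  - exfalso. apply H1. rewrite Hf. apply in_map; auto.
  - exfalso. apply H1. rewrite <- Hf. apply in_map; auto.
Qed.

Lemma app_split_uniq {A} (c : A) a b a' b' :
  a ++ c :: b = a' ++ c :: b' -> ~ In c b -> ~ In c b' -> a = a' /\ b = b'.
Proof.
  revert a'. induction a; intros a' H H1 H2; destruct a'; simpl in *.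
  - inversion H; auto.
  - inversion H; subst. exfalso; apply H1. apply in_or_app; simpl; auto.
  - inversion H; subst. exfalso; apply H2. apply in_or_app; simpl; auto.
  - inversion H; subst. destruct (IHa a' H4 H1 H2); subst; auto.
Qed.

Lemma app_len_inj {A} (a b a' b' : list A) :
  length a = length a' -> a ++ b = a' ++ b' -> a = a' /\ b = b'.
Proof.
  revert a'; induction a; destruct a'; simpl; intros; try discriminate; auto.
  inversion H0; subst. destruct (IHa a'); auto. subst; auto.
Qed.

Scheme pt_mut := Induction for proc_typed Sort Prop
with ot_mut := Induction for out_typed Sort Prop
with it_mut := Induction for in_typed Sort Prop.
Combined Scheme typed_mut from pt_mut, ot_mut, it_mut.

Lemma subst_typed_all :
  (forall G' P T, proc_typed G' P T -> forall G x S v, G' = extend G x S -> val_has_sort v S ->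
     proc_typed G (subst x v P) T) /\
  (forall G' bs Ts, out_typed G' bs Ts -> forall G x S v, G' = extend G x S -> val_has_sort v S ->
     out_typed G (map (fun b => match b with (l, e, P') => (l, subst_expr x v e, subst x v P') end) bs) Ts) /\
  (forall G' bs Ts, in_typed G' bs Ts -> forall G x S v, G' = extend G x S -> val_has_sort v S ->
     in_typed G (map (fun b => match b with (l, y, Srt, P') =>
                   (l, y, Srt, if Nat.eqb x y then P' else subst x v P') end) bs) Ts).
Proof.
  assert (Hse : forall G x S v e Srt, expr_typed (extend G x S) e Srt -> val_has_sort v S ->
            expr_typed G (subst_expr x v e) Srt).
  { intros G x S v e Srt He Hv. inversion He; subst; simpl.
    - unfold extend in H. destruct (Nat.eqb x x0) eqn:E.
      + apply Nat.eqb_eq in E; subst. rewrite Nat.eqb_refl in H. inversion H; subst. constructor; auto.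
      + rewrite Nat.eqb_sym in E. rewrite E in H. constructor; auto.
    - constructor; auto. }
  apply typed_mut; intros; subst; simpl.
  all: try (constructor; eauto; fail).
  - constructor; eauto.
    + destruct bs; simpl; congruence.
    + rewrite map_map. erewrite map_ext; [exact n0|]. intros [[? ?] ?]; reflexivity.
  - constructor; eauto.
    + destruct bs; simpl; congruence.
    + rewrite map_map. erewrite map_ext; [exact n0|]. intros [[[? ?] ?] ?]; reflexivity.
  - constructor; eauto.
    destruct (Nat.eqb x0 x) eqn:E.
    + apply Nat.eqb_eq in E; subst.
      replace (extend G0 x Srt) with (extend (extend G0 x S) x Srt); auto.
      apply functional_extensionality; intro z; unfold extend. destruct (z =? x); auto.
    + eapply H; eauto. apply functional_extensionality; intro z; unfold extend.
      destruct (z =? x) eqn:E1; destruct (z =? x0) eqn:E2; auto.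
      apply Nat.eqb_eq in E1; apply Nat.eqb_eq in E2; subst. rewrite Nat.eqb_refl in E; discriminate.
Qed.

Lemma subst_typed P T x S v :
  proc_typed (extend empty_env x S) P T -> val_has_sort v S -> proc_typed empty_env (subst x v P) T.
Proof. intros; eapply subst_typed_all; eauto. Qed.

Fixpoint gtype_ind' (P : gtype -> Prop) (HE : P GEnd)
  (HM : forall p q bs, Forall (fun b => P (snd b)) bs -> P (GMsg p q bs))
  (HC : forall c G, P G -> P (GChk c G)) (G : gtype) : P G :=
  match G with
  | GEnd => HE
  | GMsg p q bs => HM p q bs
      ((fix f (bs : list (label * sort * gtype)) : Forall (fun b => P (snd b)) bs :=
          match bs with
          | [] => Forall_nil _
          | (ls, G0) :: bs' => Forall_cons (ls, G0) (gtype_ind' P HE HM HC G0) (f bs')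
          end) bs)
  | GChk c G0 => HC c G0 (gtype_ind' P HE HM HC G0)
  end.

Lemma br_in r bs Ts l S T :
  projects_br r bs Ts -> In (l, S, T) Ts -> exists G, In (l, S, G) bs /\ projects G r T.
Proof.
  induction 1; simpl; [tauto|]. intros [E|Hi].
  - inversion E; subst. eauto.
  - destruct (IHprojects_br Hi) as [G1 [? ?]]; eauto.
Qed.

Lemma br_in' r bs Ts l S G :
  projects_br r bs Ts -> In (l, S, G) bs -> exists T, In (l, S, T) Ts /\ projects G r T.
Proof.
  induction 1; simpl; [tauto|]. intros [E|Hi].
  - inversion E; subst. eauto.
  - destruct (IHprojects_br Hi) as [T1 [? ?]]; eauto.
Qed.

Lemma br_transfer r bs bs' Ts :
  Forall2 (fun b b' => fst b = fst b' /\ forall T, projects (snd b) r T -> projects (snd b') r T) bs bs' ->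
  projects_br r bs Ts -> projects_br r bs' Ts.
Proof.
  intros HF; revert Ts; induction HF; intros Ts Hb; inversion Hb; subst; [constructor|].
  destruct y as [[l1 S1] G1]. destruct H as [H1 H2]. simpl in *. inversion H1; subst.
  constructor; auto.
Qed.

Ltac nd_eq H1 H2 := 
  match goal with Hn : NoDup (map _ ?bs) |- _ =>
    let E := fresh in assert (E := nodup_in_eq _ _ _ _ Hn H1 H2 eq_refl); inversion E; subst end.

Lemma key p q l U : p <> q -> forall G Ts Tsq S T',
  projects G p (LOut q Ts) -> projects G q (LIn p Tsq) -> In (l,S,T') Ts ->
  exists G', gstep U G (LbComm p q l) U G' /\
   (forall S' T1, In (l,S',T1) Ts -> projects G' p T1) /\
   (forall S' T1, In (l,S',T1) Tsq -> projects G' q T1) /\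
   (exists T'', In (l,S,T'') Tsq) /\
   (forall r T, r <> p -> r <> q -> projects G r T -> projects G' r T) /\
   (forall r, part_of r G' -> part_of r G).
Proof.
  intros Hpq G. induction G as [| r s bs IH | c G IH] using gtype_ind';
    intros Ts Tsq S T' Hp Hq HT.
  - inversion Hp.
  - inversion Hp; subst.
    +
      inversion Hq; subst; try congruence.
      match goal with H : projects_br p bs Ts |- _ => rename H into Hbp end.
      match goal with H : projects_br q bs Tsq |- _ => rename H into Hbq end.
      destruct (br_in _ _ _ _ _ _ Hbp HT) as [Gl [Hin Hpl]].
      exists Gl. split; [econstructor; eauto|].
      split; [|split; [|split; [|split]]].
      * intros S' T1 HT1. destruct (br_in _ _ _ _ _ _ Hbp HT1) as [G1 [Hin1 Hp1]].
        nd_eq Hin Hin1. auto.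
      * intros S' T1 HT1. destruct (br_in _ _ _ _ _ _ Hbq HT1) as [G1 [Hin1 Hp1]].
        nd_eq Hin Hin1. auto.
      * destruct (br_in' _ _ _ _ _ _ Hbq Hin) as [T2 [? ?]]; eauto.
      * intros r T Hr1 Hr2 Hr. inversion Hr; subst; try congruence. eauto.
      * intros; eapply po_br; eauto.
    +
      inversion Hq; subst; try congruence.
      match goal with H : forall l Srt G, In (l, Srt, G) bs -> projects G p _ |- _ => rename H into Hallp end.
      match goal with H : forall l Srt G, In (l, Srt, G) bs -> projects G q _ |- _ => rename H into Hallq end.
      rewrite Forall_forall in IH.
      destruct (exists_F2 (fun b b' => fst b = fst b' /\ gstep U (snd b) (LbComm p q l) U (snd b') /\
         (forall S' T1, In (l,S',T1) Ts -> projects (snd b') p T1) /\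
         (forall S' T1, In (l,S',T1) Tsq -> projects (snd b') q T1) /\
         (exists T'', In (l,S,T'') Tsq) /\
         (forall r T, r <> p -> r <> q -> projects (snd b) r T -> projects (snd b') r T) /\
         (forall r, part_of r (snd b') -> part_of r (snd b))) bs) as [bs' HF].
      { intros [[l0 S0] G0] Hin. destruct (IH _ Hin Ts Tsq S T') as [G' HG']; simpl; eauto.
        exists (l0, S0, G'); simpl; auto. }
      assert (Hne' : bs' <> []) by (eapply F2_nonnil; eauto).
      assert (Hlab : map (fun b : label * sort * gtype => fst (fst b)) bs' =
                     map (fun b : label * sort * gtype => fst (fst b)) bs).
      { symmetry; eapply F2_map; [exact HF|]. intros a b [E _]; rewrite E; auto. }
      exists (GMsg r s bs'). split; [|split; [|split; [|split; [|split]]]].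
      * apply gs_inside; auto. eapply F2_weaken; [exact HF|]. intros a b [E1 [E2 _]]; auto.
      * intros S' T1 HT1. apply pr_other; auto; [rewrite Hlab; auto|].
        intros l0 S0 G0 Hin. destruct (F2_in_r _ _ _ _ HF Hin) as [[[l1 S1] G1] [Hin1 HR]].
        simpl in HR. destruct HR as [_ [_ [Hp' _]]]. eauto.
      * intros S' T1 HT1. apply pr_other; auto; [rewrite Hlab; auto|].
        intros l0 S0 G0 Hin. destruct (F2_in_r _ _ _ _ HF Hin) as [[[l1 S1] G1] [Hin1 HR]].
        simpl in HR. destruct HR as [_ [_ [_ [Hq' _]]]]. eauto.
      * destruct bs' as [|b0 bs0]; [congruence|].
        destruct (F2_in_r _ _ _ _ HF (or_introl eq_refl)) as [b1 [_ HR]]. tauto.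
      * assert (Htr : forall r0, r0 <> p -> r0 <> q -> Forall2 (fun b b' => fst b = fst b' /\
                  forall T, projects (snd b) r0 T -> projects (snd b') r0 T) bs bs').
        { intros r0 Hn1 Hn2. eapply F2_weaken; [exact HF|]. intros a b HR. split; [destruct HR; auto|].
          destruct HR as [_ [_ [_ [_ [_ [Ht _]]]]]]. auto. }
        intros r0 T Hr1 Hr2 Hr. inversion Hr; subst.
        -- apply pr_snd; auto; [rewrite Hlab; auto|]. eapply br_transfer; eauto.
        -- apply pr_rcv; auto; [rewrite Hlab; auto|]. eapply br_transfer; eauto.
        -- apply pr_other; auto; [rewrite Hlab; auto|].
           intros l0 S0 G0 Hin. destruct (F2_in_r _ _ _ _ HF Hin) as [[[l1 S1] G1] [Hin1 HR]].
           simpl in HR. destruct HR as [_ [_ [_ [_ [_ [Ht _]]]]]]. eauto.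
      * intros r0 Hpo. inversion Hpo; subst; try constructor.
        match goal with H : In _ bs' |- _ => rename H into Hin end.
        destruct (F2_in_r _ _ _ _ HF Hin) as [[[l1 S1] G1] [Hin1 HR]].
        simpl in HR. destruct HR as [_ [_ [_ [_ [_ [_ Hpo']]]]]]. eapply po_br; eauto.
  - inversion Hp.
Qed.

Lemma upd_in r C p C' M : In (r, C) (upd p C' M) -> (r = p /\ C = C') \/ (r <> p /\ In (r, C) M).
Proof.
  unfold upd. intros H. apply in_map_iff in H as [[r0 C0] [E Hin]]. simpl in E.
  destruct (Nat.eqb r0 p) eqn:Eq.
  - inversion E; subst; auto.
  - inversion E; subst. right; split; auto. intro; subst. rewrite Nat.eqb_refl in Eq; discriminate.
Qed.

Lemma upd_fst p C M : map fst (upd p C M) = map fst M.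
Proof.
  unfold upd; rewrite map_map. apply map_ext. intros [r C0]; simpl. destruct (Nat.eqb r p) eqn:E; simpl; auto.
  symmetry; apply Nat.eqb_eq; auto.
Qed.

Lemma out_lookup Gm bs Ts l e P :
  out_typed Gm bs Ts -> In (l, e, P) bs ->
  exists S T, In (l, S, T) Ts /\ expr_typed Gm e S /\ proc_typed Gm P T.
Proof.
  induction 1; simpl; [tauto|]. intros [E|Hi].
  - inversion E; subst. eauto 7.
  - destruct (IHout_typed Hi) as [S1 [T1 [? [? ?]]]]; eauto 7.
Qed.

Lemma in_lookup Gm cs Ts l x S Q :
  in_typed Gm cs Ts -> In (l, x, S, Q) cs ->
  exists T, In (l, S, T) Ts /\ proc_typed (extend Gm x S) Q T.
Proof.
  induction 1; simpl; [tauto|]. intros [E|Hi].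
  - inversion E; subst. eauto.
  - destruct (IHin_typed Hi) as [T1 [? ?]]; eauto.
Qed.

Lemma in_labels Gm cs Ts : in_typed Gm cs Ts ->
  map (fun b : label * var * sort * proc => fst (fst (fst b))) cs =
  map (fun b : label * sort * ltype => fst (fst b)) Ts.
Proof. induction 1; simpl; f_equal; auto. Qed.

Lemma sr_comm M U G p q sp sq bs cs l v P x Srt Q :
  typed_session M U G -> p <> q ->
  In (p, mkC sp (Out q bs)) M -> In (q, mkC sq (Inp p cs)) M ->
  In (l, EVal v, P) bs -> In (l, x, Srt, Q) cs ->
  val_has_sort v Srt /\ exists G', gstep U G (LbComm p q l) U G' /\
    typed_session (upd q (mkC sq (subst x v Q)) (upd p (mkC sp P) M)) U G'.
Proof.
  intros [Hnd [Hpart Hcfg]] Hpq Hp Hq Hbp Hcq.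
  destruct (Hcfg _ _ Hp) as [taup [Tp [[Hsp Hap] [[TGp [HprojP HsubP]] HUp]]]]. simpl in Hap.
  inversion Hap; subst.
  match goal with H : out_typed _ bs ?X |- _ => rename H into Hot; rename X into Ts0 end.
  inversion HsubP; subst.
  match goal with H : forall l S T, In (l, S, T) Ts0 -> _ |- _ => rename H into HsubO end.
  match goal with H : projects G p (LOut q ?X) |- _ => rename X into Tsg end.
  destruct (out_lookup _ _ _ _ _ _ Hot Hbp) as [Sv [TP [HinP [HeP HtP]]]].
  assert (Hv : val_has_sort v Sv) by (inversion HeP; auto).
  destruct (HsubO _ _ _ HinP) as [T' [HinT' HsT']].
  destruct (Hcfg _ _ Hq) as [tauq [Tq [[Hsq Haq] [[TGq [HprojQ HsubQ]] HUq]]]]. simpl in Haq.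
  inversion Haq; subst.
  match goal with H : in_typed _ cs ?X |- _ => rename H into Hit; rename X into Tsq0 end.
  match goal with H : NoDup (map _ cs) |- _ => rename H into Hndc end.
  inversion HsubQ; subst.
  match goal with H : forall l S T, In (l, S, T) ?X -> exists T0, In (l, S, T0) Tsq0 /\ _ |- _ =>
    rename H into HsubI; rename X into Tsqg end.
  destruct (key p q l U Hpq G Tsg Tsqg Sv T' HprojP HprojQ HinT')
    as [G' [Hstep [HkP [HkQ [[T'' HT''] [Hthird Hpo]]]]]].
  destruct (HsubI _ _ _ HT'') as [Tq0 [HinQ0 HsQ0]].
  destruct (in_lookup _ _ _ _ _ _ _ Hit Hcq) as [TQ [HinQ HtQ]].
  rewrite (in_labels _ _ _ Hit) in Hndc.
  assert (E := nodup_in_eq _ _ _ _ Hndc HinQ0 HinQ eq_refl). inversion E; subst.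
  split; auto. exists G'. split; auto.
  split; [rewrite !upd_fst; auto|]. split.
  { intros r Hr; rewrite !upd_fst; apply Hpart. destruct Hr; [left; apply Hpo|right]; auto. }
  intros r C HrC. apply upd_in in HrC as [[-> ->]|[Hrq HrC]].
  - exists tauq, TQ. split; [split; simpl; auto; eapply subst_typed; eauto|].
    split; auto. exists T''; split; eauto.
  - apply upd_in in HrC as [[-> ->]|[Hrp HrC]].
    + exists taup, TP. split; [split; simpl; auto|]. split; auto. exists T'; split; eauto.
    + destruct (Hcfg r C HrC) as [tau [T [Hc [[TG [Hpr Hs]] HU]]]].
      exists tau, T; split; auto; split; auto. exists TG; split; auto.
Qed.

Lemma act_chk M U G r C c P : typed_session M U G -> In (r, C) M -> active C = Chk c P ->
  exists tau TP TG, Forall2 (fun sp tt => fst sp = fst tt /\ proc_typed empty_env (snd sp) (snd tt)) (saved C) tau /\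
    proc_typed empty_env P TP /\ projects G r (LChk c TG) /\ subtype TP TG /\
    Forall2 (fun ct cg => fst ct = fst cg /\
                  exists TGc, projects (snd cg) r TGc /\ subtype (snd ct) TGc) tau U.
Proof.
  intros [_ [_ Hcfg]] HC HA. destruct (Hcfg _ _ HC) as [tau [T [[Hs Ha] [[TG [Hpr Hsub]] HU]]]].
  rewrite HA in Ha. inversion Ha; subst. inversion Hsub; subst. eauto 10.
Qed.

Lemma sr_chk M U G c M' : typed_session M U G -> M <> [] ->
  Forall2 (fun e e' => fst e = fst e' /\
               exists P, active (snd e) = Chk c P /\
                         snd e' = mkC (saved (snd e) ++ [(c, P)]) P) M M' ->
  exists G0, gstep U G (LbChk c) (U ++ [(c, G0)]) G0 /\ typed_session M' (U ++ [(c, G0)]) G0.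
Proof.
  intros HT HM HF.
  assert (Hall : forall a Ca, In (a, Ca) M -> exists P, active Ca = Chk c P).
  { intros a Ca Hin. destruct (F2_in_l _ _ _ _ HF Hin) as [y [_ [_ [P [HP _]]]]]. eauto. }
  destruct M as [|[r0 C0] M0]; [congruence|].
  destruct (Hall r0 C0 (or_introl eq_refl)) as [P0 HP0].
  destruct (act_chk _ _ _ _ _ _ _ HT (or_introl eq_refl) HP0) as [tau0 [TP0 [TG0 [_ [_ [Hpr0 _]]]]]].
  destruct G as [| a b bs | c' G0].
  - inversion Hpr0.
  - inversion Hpr0; subst.
    assert (Ha : In a (map fst ((r0, C0) :: M0))).
    { destruct HT as [_ [Hpart _]]. apply Hpart. left. constructor. }
    apply in_map_iff in Ha as [[a' Ca] [Ea Hina]]. simpl in Ea; subst.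
    destruct (Hall _ _ Hina) as [Pa HPa].
    destruct (act_chk _ _ _ _ _ _ _ HT Hina HPa) as [? [? [? [_ [_ [Hpra _]]]]]].
    inversion Hpra; subst; congruence.
  - inversion Hpr0; subst. exists G0. split; [constructor|].
    destruct HT as [Hnd [Hpart Hcfg]].
    assert (Hfst : map fst ((r0, C0) :: M0) = map fst M').
    { eapply F2_map; [exact HF|]. intros x y [E _]; auto. }
    split; [rewrite <- Hfst; auto|]. split.
    + intros r Hr. rewrite <- Hfst. apply Hpart. destruct Hr as [Hr|[c1 [Gc [Hin Hr]]]].
      * left; constructor; auto.
      * apply in_app_or in Hin as [Hin|[E|[]]].
        -- right; eauto.
        -- inversion E; subst. left; constructor; auto.
    + intros r C' HrC. destruct (F2_in_r _ _ _ _ HF HrC) as [[r1 C] [HinC [E [P [HP HC']]]]].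
      simpl in E, HP, HC'; subst.
      destruct (act_chk _ _ _ _ _ _ _ (conj Hnd (conj Hpart Hcfg)) HinC HP) as [tau [TP [TG [Hs [HtP [Hpr [Hsub HU]]]]]]].
      inversion Hpr; subst.
      exists (tau ++ [(c, TP)]), TP. split; [split; simpl; auto|].
      * apply Forall2_app; auto.
      * split; [eauto|]. apply Forall2_app; auto. constructor; [|constructor]. simpl. split; eauto.
Qed.

Lemma names_eq (s : list (cname * proc)) tau (U : list (cname * gtype)) r :
  Forall2 (fun sp tt => fst sp = fst tt /\ proc_typed empty_env (snd sp) (snd tt)) s tau ->
  Forall2 (fun ct cg => fst ct = fst cg /\
                  exists TGc, projects (snd cg) r TGc /\ subtype (snd ct) TGc) tau U ->
  map fst s = map fst U.
Proof.
  intros H1 H2. transitivity (map fst tau).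
  - eapply F2_map; [exact H1|]. intros ? ? [E _]; auto.
  - eapply F2_map; [exact H2|]. intros ? ? [E _]; auto.
Qed.

Lemma sr_roll M U G c M' : typed_session M U G -> M <> [] ->
  Forall2 (fun e e' => fst e = fst e' /\
               exists s1 P s2, saved (snd e) = s1 ++ (c, P) :: s2 /\
                               ~ In c (map fst s2) /\
                               snd e' = mkC (s1 ++ [(c, P)]) P) M M' ->
  exists U1 Gc, gstep U G (LbRoll c) (U1 ++ [(c, Gc)]) Gc /\ typed_session M' (U1 ++ [(c, Gc)]) Gc.
Proof.
  intros HT HM HF. destruct HT as [Hnd [Hpart Hcfg]].
  destruct M as [|[r0 C0] M0] eqn:EM; [congruence|]. rewrite <- EM in *.
  assert (Hin0 : In (r0, C0) M) by (rewrite EM; left; auto).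
  destruct (F2_in_l _ _ _ _ HF Hin0) as [y0 [_ [_ [s1 [P [s2 [Hs0 [Hc0 _]]]]]]]].
  simpl in Hs0.
  destruct (Hcfg _ _ Hin0) as [tau0 [T0 [[Hst0 _] [_ HU0]]]].
  pose proof (names_eq _ _ _ _ Hst0 HU0) as Hn0. rewrite Hs0, map_app in Hn0. simpl in Hn0.
  symmetry in Hn0. apply map_eq_app in Hn0 as [U1 [U2' [EU [HU1 HU2']]]].
  destruct U2' as [|[c' Gc] U2]; simpl in HU2'; inversion HU2'; subst c'.
  exists U1, Gc. split; [eapply gs_roll; eauto; rewrite H1; auto|].
  assert (Hfst : map fst M = map fst M').
  { eapply F2_map; [exact HF|]. intros x y [E _]; auto. }
  split; [rewrite <- Hfst; auto|]. split.
  - intros r Hr. rewrite <- Hfst. apply Hpart. right. destruct Hr as [Hr|[c1 [Gc1 [Hin Hr]]]].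
    + exists c, Gc; split; auto. subst U; apply in_or_app; simpl; auto.
    + apply in_app_or in Hin as [Hin|[E|[]]].
      * exists c1, Gc1; split; auto. subst U; apply in_or_app; auto.
      * inversion E; subst. exists c1, Gc1; split; auto. apply in_or_app; simpl; auto.
  - intros r C' HrC. destruct (F2_in_r _ _ _ _ HF HrC) as [[r1 C] [HinC [E [s1' [P' [s2' [Hs' [Hc' HC']]]]]]]].
    simpl in E, Hs', HC'; subst r1 C'.
    destruct (Hcfg _ _ HinC) as [tau [T [[Hst _] [_ HU]]]].
    pose proof (names_eq _ _ _ _ Hst HU) as Hn. rewrite Hs', EU, !map_app in Hn. simpl in Hn.
    rewrite H1 in Hn.
    destruct (app_split_uniq _ _ _ _ _ Hn Hc' Hc0) as [Hn1 _].
    rewrite Hs' in Hst.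
    apply Forall2_app_inv_l in Hst as [t1 [t2' [Hst1 [Hst2 Et]]]]. subst tau.
    inversion Hst2 as [|[c1 P1] [c2 Tc] ? t2 [Ec HtP] Hst3]; subst. simpl in Ec; subst c2.
    apply Forall2_app_inv_l in HU as [u1 [u2' [HU1' [HU2 Eu]]]].
    inversion HU2 as [|? [c3 Gc'] ? u2 [Ec3 [TGc [HprG HsG]]] HU3]; subst. simpl in Ec3; subst c3.
    assert (Hl : length U1 = length u1).
    { rewrite <- (F2_len _ _ _ HU1'), <- (F2_len _ _ _ Hst1).
      rewrite <- (length_map fst U1), <- (length_map fst s1'), Hn1; auto. }
    destruct (app_len_inj _ _ _ _ Hl Eu) as [-> E2]. inversion E2; subst.
    exists (t1 ++ [(c, Tc)]), Tc. split; [split; simpl; auto|].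
    + apply Forall2_app; auto.
    + split; [eauto|]. apply Forall2_app; auto. constructor; [|constructor]. simpl. split; eauto.
Qed.

Lemma sr M U G a M' : typed_session M U G -> sstep M a M' ->
  (exists U' G', gstep U G (label_of a) U' G' /\ typed_session M' U' G') /\
  (forall p q l v x Srt, a = AComm p q l v x Srt -> val_has_sort v Srt).
Proof.
  intros HT Hs. destruct Hs.
  - destruct (sr_comm _ _ _ _ _ _ _ _ _ _ _ _ _ _ _ HT H H0 H1 H2 H3) as [Hv [G' [Hg Ht]]].
    split; [exists U, G'; auto|]. intros ? ? ? ? ? ? E; inversion E; subst; auto.
  - destruct (sr_chk _ _ _ _ _ HT H H0) as [G0 [? ?]].
    split; [eauto|]. discriminate.
  - destruct (sr_roll _ _ _ _ _ HT H H0) as [U1 [Gc [? ?]]].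
    split; [eauto|]. discriminate.
Qed.

Lemma wt_step N pos a N' : wt_network N -> nstep N pos a N' ->
  wt_network N' /\ (forall p q l v x Srt, a = AComm p q l v x Srt -> val_has_sort v Srt).
Proof.
  intros Hw Hs. revert Hw. induction Hs; intros Hw; inversion Hw; subst.
  - destruct (sr _ _ _ _ _ H1 H) as [[U' [G' [_ Ht]]] Hv]. split; auto. econstructor; eauto.
  - destruct (IHHs H1) as [? ?]; split; auto. constructor; auto.
  - destruct (IHHs H2) as [? ?]; split; auto. constructor; auto.
Qed.

Lemma nstep_same N pos a N' M : nstep N pos a N' -> session_at N pos = Some M ->
  exists M', sstep M a M' /\ session_at N' pos = Some M'.
Proof.
  induction 1; simpl; intros E; auto. inversion E; subst; eauto.
Qed.

Lemma nstep_other N pos a N' pos' : nstep N pos a N' -> pos' <> pos ->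
  session_at N' pos' = session_at N pos'.
Proof.
  intros Hs; revert pos'; induction Hs; intros pos' Hne.
  - destruct pos'; simpl; congruence.
  - destruct pos' as [|[|] pos']; simpl; auto. apply IHHs; congruence.
  - destruct pos' as [|[|] pos']; simpl; auto. apply IHHs; congruence.
Qed.

Theorem theorem2 :
  forall N : network, wt_network N ->
  (* (1) no reduction ever has a type mismatch *)
  (forall tr N' pos p q l v x Srt N'',
      nsteps N tr N' -> nstep N' pos (AComm p q l v x Srt) N'' ->
      ~ type_mismatch v Srt) /\
  (* (2) the communications (and checkpoints / rollbacks) of each session follow
         the global types typing it *)
  (forall tr N' pos M U G,
      nsteps N tr N' -> session_at N pos = Some M -> typed_session M U G ->
      gtrace U G (trace_at pos tr)).
Proof.
  intros N Hw. split.
  - intros tr N' pos p q l v x Srt N'' Hss. revert Hw.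
    induction Hss; intros Hw Hs.
    + destruct (wt_step _ _ _ _ Hw Hs) as [_ Hv]. intros Hm; apply Hm. exists Srt; split; eauto.
    + destruct (wt_step _ _ _ _ Hw H) as [Hw' _]. auto.
  - intros tr N' pos M U G Hss. clear Hw. revert M U G.
    induction Hss; intros M U G Hat HT.
    + constructor.
    + unfold trace_at; simpl. destruct (list_eq_dec bool_dec pos0 pos) as [->|Hne].
      * destruct (nstep_same _ _ _ _ _ H Hat) as [M1 [Hs1 Hat1]].
        destruct (sr _ _ _ _ _ HT Hs1) as [[U' [G' [Hg Ht]]] _].
        simpl. econstructor; [exact Hg|]. apply (IHHss _ _ _ Hat1 Ht).
      * apply (IHHss M U G); auto. rewrite (nstep_other _ _ _ _ _ H); auto.
Qed.
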